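(* Let $n, r$ be positive integers and let $c: E(G)\to\mathbb{R}$ be a proper edge coloring of a graph $G$. Then there is a proper edge coloring $\widehat{c}: E(G\square K_n)\to\mathbb{R}$ such that $$\dim W_{\widehat{c}}(G\square K_n, r)\geqslant\sum_{t=0}^{n-1}\dim W_c(G, r-t),$$ where $W_c(G, i)$ is defined to be $\{0\}$ if $i\leqslant0$.
   Context: All graphs are finite, simple and undirected; $K_n$ is the complete graph on $n$ vertices. The Cartesian product $G\square H$ has vertex set $V(G)\times V(H)$, with $(g_1,h_1)$ adjacent to $(g_2,h_2)$ iff either $g_1=g_2$ and $h_1h_2\in E(H)$, or $h_1=h_2$ and $g_1g_2\in E(G)$. For a positive integer $r$ and a graph $G$ with a proper edge coloring $c: E(G)\to\mathbb{R}$, $W_c(G,r)$ is the real vector space of all functions $\phi: E(G)\to\mathbb{R}$ for which there exist real polynomials $\{P_v(x)\}_{v\in V(G)}$ with $\deg P_v\leqslant r-1$ for every vertex $v$ and $P_u(c(uv))=P_v(c(uv))=\phi(uv)$ for every edge $uv\in E(G)$. *)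

(* Defs.v *)
From HB Require Import structures.
From mathcomp Require Import all_boot all_order all_algebra.
From mathcomp Require Import boolp reals.
Set Implicit Arguments. Unset Strict Implicit. Unset Printing Implicit Defensive.
Import Order.TTheory GRing.Theory Num.Theory.
Local Open Scope ring_scope.

Definition simple_graph (V : finType) (e : rel V) : Prop :=
  symmetric e /\ irreflexive e.

Definition is_edge (V : finType) (e : rel V) : pred {set V} :=
  fun A => [exists u, exists v, e u v && (A == [set u; v])].

Definition Edge (V : finType) (e : rel V) : finType := {A : {set V} | is_edge e A}.

Definition proper_coloring (R : realType) (V : finType) (e : rel V)
  (c : Edge e -> R) : Prop :=
  forall A B : Edge e, A != B ->
    (exists v, (v \in val A) && (v \in val B)) -> c A != c B.

(* phi \in W_c(G, r): there are polynomials P_v with deg P_v <= r - 1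
   (i.e. size (P v) <= r; for r = 0 only the zero polynomial) such that
   P_u(c(uv)) = P_v(c(uv)) = phi(uv) for every edge uv. *)
Definition inW (R : realType) (V : finType) (e : rel V) (c : Edge e -> R)
  (r : nat) (phi : {ffun Edge e -> R^o}) : Prop :=
  exists P : V -> {poly R},
    (forall v, (size (P v) <= r)%N) /\
    (forall (A : Edge e) (u : V), u \in val A -> (P u).[c A] = phi A).

(* dim W_c(G, r): the maximal size of a linearly independent family of
   elements of W_c(G, r) in the space of functions E(G) -> R. *)
Definition dimW (R : realType) (V : finType) (e : rel V) (c : Edge e -> R)
  (r : nat) : nat :=
  \max_(k < (\dim (@fullv R {ffun Edge e -> R^o})).+1 |
        `[< exists X : k.-tuple {ffun Edge e -> R^o},
              free X /\ forall i : 'I_k, inW c r (tnth X i) >]) k.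

Definition cart_Kn (V : finType) (e : rel V) (n : nat) : rel (V * 'I_n) :=
  fun x y => ((x.1 == y.1) && (x.2 != y.2)) || ((x.2 == y.2) && e x.1 y.1).
Arguments cart_Kn {V} e n.

(* Main.v *)
Set Warnings "-notation-overridden,-ambiguous-paths,-deprecated".
Require Import Defs.
From HB Require Import structures.
From mathcomp Require Import all_boot all_order all_algebra.
From mathcomp Require Import boolp reals.
From mathcomp Require Import zify ring lra.
Import Order.TTheory GRing.Theory Num.Theory.
Local Open Scope ring_scope.

Section Constr.
Variables (R : realType) (V : finType) (e : rel V) (n r : nat) (c : Edge e -> R).
Hypothesis esy : symmetric e.
Hypothesis eirr : irreflexive e.
Hypothesis cprop : proper_coloring c.


Local Notation ce := (cart_Kn e n).

Definition Mb : R := \sum_(E : Edge e) `|c E|.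
Definition av (i : 'I_n) : R := Mb + 1 + (i : nat)%:R.
Definition cG (B : {set V}) : R :=
  if @insub _ (is_edge e) (Edge e) B is Some E then c E else 0.
Definition Fc (A : {set (V * 'I_n)}) : R :=
  if [forall z in A, forall z' in A, z.1 == z'.1] then \sum_(z in A) av z.2
  else cG [set z.1 | z in A].
Definition chat (A : Edge ce) : R := Fc (val A).

Lemma Mb_ge0 : 0 <= Mb.
Proof. by apply: sumr_ge0 => E _; exact: normr_ge0. Qed.

Lemma c_le (E : Edge e) : c E <= Mb.
Proof.
apply: le_trans (ler_norm _) _.
by rewrite /Mb (bigD1 E) //= lerDl sumr_ge0 // => ? _; exact: normr_ge0.
Qed.

Lemma av_big (E : Edge e) i j : c E < av i + av j.
Proof.
have := c_le E; have := Mb_ge0; rewrite /av.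
have : 0 <= (i : nat)%:R :> R by exact: ler0n.
have : 0 <= (j : nat)%:R :> R by exact: ler0n.
lra.
Qed.

Lemma av_inj i j : av i = av j -> i = j.
Proof. by rewrite /av => /addrI /eqP; rewrite eqr_nat => /eqP /val_inj. Qed.

Lemma edge2 (E : Edge e) : exists u v, e u v /\ val E = [set u; v].
Proof.
case: E => A /= /existsP [u /existsP [v /andP [huv /eqP ->]]].
by exists u, v.
Qed.

Lemma edgeP (A : Edge ce) : exists p q, ce p q /\ val A = [set p; q].
Proof.
case: A => B /= /existsP [u /existsP [v /andP [huv /eqP ->]]].
by exists u, v.
Qed.

Lemma ce_sym : symmetric ce.
Proof.
move=> p q; rewrite /cart_Kn [q.1 == _]eq_sym [q.2 == _]eq_sym esy //.
Qed.

Lemma ce_irr p : ce p p = false.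
Proof. by rewrite /cart_Kn !eqxx eirr. Qed.

Lemma is_edge2 u v : e u v -> is_edge e [set u; v].
Proof. by move=> h; apply/existsP; exists u; apply/existsP; exists v; rewrite h eqxx. Qed.

Lemma cG2 u v (h : e u v) : cG [set u; v] = c (exist (fun A => is_edge e A) [set u; v] (is_edge2 _ _ h)).
Proof. by rewrite /cG (insubT (is_edge e) (is_edge2 _ _ h)). Qed.

Lemma Fc2 p q : ce p q ->
  Fc [set p; q] = if p.1 == q.1 then av p.2 + av q.2 else cG [set p.1; q.1].
Proof.
rewrite /Fc => hpq; case: eqP => h1.
  have pq : p != q.
    by apply/eqP => epq; move: hpq; rewrite epq ce_irr.
  rewrite ifT; last first.
    by apply/forall_inP => z /set2P [] -> ; apply/forall_inP => z' /set2P [] ->; rewrite ?h1.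
  by rewrite big_setU1 ?big_set1 // inE.
rewrite ifF; last first.
  apply/negbTE/negP => /forall_inP /(_ p (set21 _ _)) /forall_inP /(_ q (set22 _ _)) /eqP.
  by [].
by rewrite imsetU1 imset_set1.
Qed.

Lemma rot_edge (A : Edge ce) w : w \in val A -> exists x, ce w x /\ val A = [set w; x].
Proof.
case: (edgeP A) => p [q [hpq ->]] /set2P [] ->.
  by exists q.
exists p; split; first by rewrite ce_sym.
by rewrite setUC.
Qed.


Lemma chat_proper : proper_coloring chat.
Proof.
move=> A B AB [w /andP [wA wB]].
case: (rot_edge A w wA) => x [hx Ax]; case: (rot_edge B w wB) => y [hy By].
have xy : x != y.
  apply/eqP => exy; move/eqP: AB; apply; apply/val_inj; by rewrite Ax By exy.
rewrite /chat Ax By !Fc2 //.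
case: (eqVneq w.1 x.1) => h1; case: (eqVneq w.1 y.1) => h2.
- rewrite (inj_eq (addrI _)); apply/eqP => /av_inj e2.
  move/eqP: xy; apply.
  by rewrite [x]surjective_pairing [y]surjective_pairing -h1 -h2 e2.
- move: hy; rewrite /cart_Kn (negbTE h2) /= => /andP [_ hey].
  rewrite (cG2 _ _ hey); apply/eqP => h.
  by have := av_big (exist (fun A => is_edge e A) [set w.1; y.1] (is_edge2 _ _ hey)) w.2 x.2; rewrite h ltxx.
- move: hx; rewrite /cart_Kn (negbTE h1) /= => /andP [_ hex].
  rewrite (cG2 _ _ hex); apply/eqP => h.
  by have := av_big (exist (fun A => is_edge e A) [set w.1; x.1] (is_edge2 _ _ hex)) w.2 y.2; rewrite -h ltxx.
- move: hx; rewrite /cart_Kn (negbTE h1) /= => /andP [/eqP hx2 hex].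
  move: hy; rewrite /cart_Kn (negbTE h2) /= => /andP [/eqP hy2 hey].
  rewrite (cG2 _ _ hex) (cG2 _ _ hey); apply: cprop; last first.
    by exists w.1; rewrite /= !inE eqxx.
  apply/eqP => /(congr1 val) /= /setP /(_ y.1); rewrite !inE eqxx orbT eq_sym (negbTE h2) /=.
  move/eqP => ey1; move/eqP: xy; apply.
  by rewrite [x]surjective_pairing [y]surjective_pairing ey1 -hx2 -hy2.
Qed.


Definition Pch (t : nat) (x : {ffun Edge e -> R^o}) : V -> {poly R} :=
  match pselect (inW c (r - t) x) with
  | left H => proj1_sig (cid H) | right _ => fun _ => 0 end.

Lemma PchP t x : inW c (r - t) x ->
  (forall v, (size (Pch t x v) <= r - t)%N) /\
  (forall (E : Edge e) u, u \in val E -> (Pch t x u).[c E] = x E).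
Proof. by rewrite /Pch; case: pselect => // H _; exact: (proj2_sig (cid H)). Qed.

Definition hp (t : nat) (i : 'I_n) : {poly R} := (av i ^+ t) *: ('X - (av i)%:P) ^+ t.
Definition Qp t x (z : V * 'I_n) := Pch t x z.1 * hp t z.2.
Definition Yf t x : {ffun Edge ce -> R^o} :=
  [ffun A : Edge ce => (if [pick z in val A] is Some z then (Qp t x z).[chat A] else 0 : R^o)].

Lemma hpE t i y : (hp t i).[y] = (av i * (y - av i)) ^+ t.
Proof. by rewrite /hp hornerZ horner_exp hornerXsubC exprMn. Qed.

Lemma Q_agree t x : inW c (r - t) x -> forall (A : Edge ce) z z',
  z \in val A -> z' \in val A -> (Qp t x z).[chat A] = (Qp t x z').[chat A].
Proof.
move=> /PchP [_ Pint] A.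
suff key: forall p q, ce p q -> val A = [set p; q] ->
    (Qp t x p).[chat A] = (Qp t x q).[chat A].
  case: (edgeP A) => p [q [hpq hA]] z z'; rewrite hA => /set2P [] -> /set2P [] -> //.
    exact: key.
  by symmetry; exact: key.
move=> p q hpq hA; rewrite /chat hA Fc2 // /Qp !hornerM !hpE.
case: eqP => h1.
  by rewrite h1; congr (_ * _ ^+ _); ring.
move: hpq; rewrite /cart_Kn (introF eqP h1) /= => /andP [/eqP h2 hed].
rewrite (cG2 _ _ hed) h2; congr (_ * _).
by rewrite !Pint //= !inE eqxx ?orbT.
Qed.

Lemma Y_inW t x : inW c (r - t) x -> inW chat r (Yf t x).
Proof.
move=> hx; have [Psz _] := PchP _ _ hx.
exists (Qp t x); split.
  move=> z; rewrite /Qp; have [->|nz] := eqVneq (Pch t x z.1) 0.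
    by rewrite mul0r size_poly0.
  apply: leq_trans (size_mul_leq _ _) _.
  have hs := Psz z.1.
  have hh : (size (hp t z.2) <= t.+1)%N.
    by rewrite /hp (leq_trans (size_scale_leq _ _)) // size_exp_XsubC.
  have : (0 < size (Pch t x z.1))%N by rewrite size_poly_gt0.
  move=> h0; have ht : (t < r)%N by rewrite -subn_gt0 (leq_trans h0 hs).
  rewrite -subn1; apply: leq_trans (leq_sub2r 1 (leq_add hs hh)) _; lia.
move=> A u uA; rewrite ffunE; case: pickP => [z zA | /(_ u)]; last by rewrite uA.
exact: Q_agree.
Qed.


Lemma hor (E : Edge e) (j : 'I_n) : exists H : Edge ce, forall t x,
  inW c (r - t) x -> Yf t x H = x E * (av j * (c E - av j)) ^+ t.
Proof.
case: (edge2 E) => u [v [huv hE]].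
have hc : ce (u, j) (v, j) by rewrite /cart_Kn /= !eqxx huv orbT.
have hH : is_edge ce [set (u, j); (v, j)].
  by apply/existsP; exists (u, j); apply/existsP; exists (v, j); rewrite hc eqxx.
exists (exist (fun A => is_edge ce A) _ hH) => t x hx.
have [_ Pint] := PchP _ _ hx.
rewrite ffunE; case: pickP => [z zH|/(_ (u, j))]; last by rewrite /= set21.
rewrite (Q_agree _ _ hx _ _ _ zH (set21 _ _ : (u, j) \in val (exist (fun A => is_edge ce A) _ hH))).
have uv : u != v by apply/eqP => euv; move: huv; rewrite euv eirr.
rewrite /chat /= Fc2 //= (negbTE uv) -hE /cG valK.
by rewrite /Qp hornerM hpE /= Pint // hE set21.
Qed.

Definition ext m (k : 'I_m -> R) (j : nat) : R :=
  if (insub j : option 'I_m) is Some i then k i else 0.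

Arguments ext {m}.

Lemma extE m (k : 'I_m -> R) (i : 'I_m) : ext k i = k i.
Proof. by rewrite /ext valK. Qed.
Arguments extE {m}.

Lemma vander (phi : 'I_n -> R) (E : Edge e) :
  (forall j : 'I_n, \sum_(t < n) phi t * (av j * (c E - av j)) ^+ t = 0) ->
  forall t, phi t = 0.
Proof.
move=> h.
pose p := \poly_(m < n) ext phi m.
pose y (j : 'I_n) := av j * (c E - av j).
have yinj : injective y.
  move=> i j hij; apply/eqP; case: (eqVneq i j) => // nij; exfalso.
  have : (av i - av j) * (c E - av i - av j) = 0.
    have -> : (av i - av j) * (c E - av i - av j) = y i - y j by rewrite /y; ring.
    by rewrite hij subrr.
  move/eqP; rewrite mulf_eq0 subr_eq0 => /orP [/eqP /av_inj /eqP|].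
    by rewrite (negbTE nij).
  move/eqP => h0; have := av_big E i j; lra.
have p0 : p = 0.
  apply/eqP; apply/negPn/negP => pn0.
  have := @max_poly_roots _ p [seq y j | j <- enum 'I_n] pn0.
  rewrite map_inj_uniq ?enum_uniq // size_map size_enum_ord.
  have -> : all (root p) [seq y j | j <- enum 'I_n].
    apply/allP => _ /mapP [j _ ->]; rewrite /root horner_poly.
    by apply/eqP; rewrite -[RHS](h j); apply: eq_bigr => t _; rewrite extE.
  move=> /(_ isT isT) h2; have := leq_trans h2 (size_poly n (ext phi)); by rewrite ltnn.
move=> t; have := coef_poly n (ext phi) t; rewrite -/p p0 coef0 ltn_ord extE.
by move->.
Qed.

Variable Xs : 'I_n -> seq {ffun Edge e -> R^o}.
Hypothesis HX : forall t : 'I_n, free (Xs t) /\ forall x, x \in Xs t -> inW c (r - t) x.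

Definition Ys (t : 'I_n) := map (Yf t) (Xs t).

Lemma core (k : 'I_n -> nat -> R) :
  \sum_(t < n) \sum_(i < size (Ys t)) k t i *: (Ys t)`_i = 0 ->
  forall t (i : 'I_(size (Ys t))), k t i = 0.
Proof.
move=> hsum.
pose Phi t : {ffun Edge e -> R^o} := \sum_(i < size (Ys t)) k t i *: (Xs t)`_i.
have Phi0 : forall t, Phi t = 0.
  have PhiE : forall E t, Phi t E = 0.
    move=> E; apply: (vander (fun t => Phi t E) E) => j.
    case: (hor E j) => H hH.
    have := congr1 (fun f : {ffun Edge ce -> R^o} => f H) hsum.
    rewrite sum_ffunE [in RHS]ffunE => h0; rewrite -[RHS]h0.
    apply: eq_bigr => t _; rewrite /Phi !sum_ffunE mulr_suml; apply: eq_bigr => i _.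
    have hi : (i < size (Xs t))%N by rewrite -(size_map (Yf t)); exact: ltn_ord.
    rewrite !ffunE (nth_map 0) // hH; last by apply: (HX t).2; exact: mem_nth.
    by rewrite /GRing.scale /= mulrA.
  by move=> t; apply/ffunP => E; rewrite PhiE ffunE.
move=> t.
have ssz : size (Xs t) == size (Ys t) by rewrite size_map.
pose X' := Tuple ssz.
have fr : free X' by exact: (HX t).1.
by move/freeP: fr => /(_ (fun i => k t i)); apply; exact: Phi0 t.
Qed.

Lemma Ys_free t : free (Ys t).
Proof.
suff : free (in_tuple (Ys t)) by []. apply/freeP => k hk i.
pose K s m := if s == t then ext k m else 0.
have := core K _ t i; rewrite /K eqxx extE; apply.
rewrite (bigD1 t) //= eqxx [X in _ + X]big1 ?addr0.
  by rewrite -[RHS]hk; apply: eq_bigr => j _; rewrite extE.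
by move=> s /negbTE ->; apply: big1 => j _; rewrite scale0r.
Qed.

Lemma Ys_direct : directv (\sum_(t < n) <<Ys t>>).
Proof.
apply/directv_sum_independent => us hus hsum t _.
have hU s : us s = \sum_i coord (in_tuple (Ys s)) i (us s) *: (Ys s)`_i.
  exact: (@coord_span _ _ _ (in_tuple (Ys s)) _ (hus s isT)).
pose K s m := ext (fun i => coord (in_tuple (Ys s)) i (us s)) m.
have K0 := core K.
rewrite hU big1 // => i _.
rewrite -(extE (fun i => coord (in_tuple (Ys t)) i (us t))) -/(K t i) K0 ?scale0r //.
rewrite -[RHS]hsum; apply: eq_bigr => s _.
by rewrite [RHS]hU; apply: eq_bigr => j _; rewrite /K extE.
Qed.

End Constr.

Lemma dimW_ge (R : realType) (V : finType) (e : rel V) (c : Edge e -> R) r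
  (S : seq {ffun Edge e -> R^o}) :
  free S -> (forall x, x \in S -> inW c r x) -> (size S <= dimW c r)%N.
Proof.
move=> fS hS.
have hle : (size S < (\dim (@fullv R {ffun Edge e -> R^o})).+1)%N.
  by rewrite ltnS -(eqP fS); exact: dimvS (subvf _).
rewrite /dimW; apply: (@leq_bigmax_cond _ _ (fun k : 'I_ _ => nat_of_ord k) (Ordinal hle)).
apply: asboolT; exists (in_tuple S); split => // i; apply: hS; exact: mem_tnth.
Qed.

Lemma dimW_att (R : realType) (V : finType) (e : rel V) (c : Edge e -> R) m :
  exists S : seq {ffun Edge e -> R^o},
    size S = dimW c m /\ free S /\ forall x, x \in S -> inW c m x.
Proof.
have P0 : `[< exists X : (nat_of_ord (ord0 : 'I_(\dim (@fullv R {ffun Edge e -> R^o})).+1)).-tuple {ffun Edge e -> R^o},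
              free X /\ forall i, inW c m (tnth X i) >].
  by apply: asboolT; exists [tuple]; split; [exact: nil_free | case].
rewrite /dimW (bigop.bigmax_eq_arg ord0 P0).
case: arg_maxnP => // i /asboolW [X [fX hX]] _.
exists X; split; first exact: size_tuple.
split => // x /tnthP [j ->]; exact: hX.
Qed.

Theorem lemma3p4 (R : realType) (V : finType) (e : rel V) (n r : nat)
  (c : Edge e -> R) :
  simple_graph e -> (0 < n)%N -> (0 < r)%N -> proper_coloring c ->
  exists chat : Edge (cart_Kn e n) -> R,
    proper_coloring chat /\
    (\sum_(t < n) dimW c (r - t)%N <= dimW chat r)%N.
Proof.
move=> [esy eirr] n0 r0 cprop.
exists (chat R V e n c); split; first exact: (chat_proper _ _ _ _ _ esy eirr cprop).
have : forall t : 'I_n, exists S : seq {ffun Edge e -> R^o},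
    size S = dimW c (r - t) /\ free S /\ forall x, x \in S -> inW c (r - t) x.
  by move=> t; exact: dimW_att.
move=> /choice [Xs HXs].
have HX : forall t : 'I_n, free (Xs t) /\ forall x, x \in Xs t -> inW c (r - t) x.
  by move=> t; have [_ [? ?]] := HXs t.
pose S := \big[cat/[::]]_(t < n) Ys R V e n r c Xs t.
have fS : free S.
  apply: bigcat_free; first exact: (Ys_direct _ _ _ _ _ _ eirr _ HX).
  by move=> t _; exact: (Ys_free _ _ _ _ _ _ eirr _ HX).
have szS : size S = (\sum_(t < n) dimW c (r - t))%N.
  rewrite /S (big_morph _ (@size_cat _) (erefl _)); apply: eq_bigr => t _.
  by rewrite size_map (HXs t).1.
have inS : forall x, x \in S -> inW (chat R V e n c) r x.
  rewrite /S; apply: (big_rec (fun s => forall x, x \in s -> inW (chat R V e n c) r x)) => // t s _ hs x.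
  rewrite mem_cat => /orP [/mapP [y hy ->] | /hs //].
  by apply: (Y_inW _ _ _ _ _ _ eirr); exact: (HX t).2.
by rewrite -szS; apply: dimW_ge.
Qed.
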